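(* Let $\mathcal{D}\subset\mathbb{R}^n$ be a parameter set, let $X$ and $Y$ be finite-dimensional real Hilbert spaces with norms $\|\cdot\|_X$, $\|\cdot\|_Y$, and for each $\mu\in\mathcal{D}$ let $m(\cdot,\cdot;\mu):X\times X\to\mathbb{R}$, $a(\cdot,\cdot;\mu):X\times X\to\mathbb{R}$, $b(\cdot,\cdot;\mu):X\times Y\to\mathbb{R}$ be bilinear forms such that $m(\cdot,\cdot;\mu)$ is symmetric with $m(v,v;\mu)>0$ for all $0\neq v\in X$, $a(\cdot,\cdot;\mu)$ is symmetric, and \[ \gamma_m(\mu)=\sup_{u\in X}\sup_{v\in X}\frac{m(u,v;\mu)}{\|u\|_X\|v\|_X}<\infty,\quad \gamma_a(\mu)=\sup_{u\in X}\sup_{v\in X}\frac{a(u,v;\mu)}{\|u\|_X\|v\|_X}<\infty, \] \[ \alpha_a(\mu)=\inf_{v\in X}\frac{a(v,v;\mu)}{\|v\|_X^2}>0,\qquad \beta(\mu)=\inf_{q\in Y}\sup_{v\in X}\frac{b(v,q;\mu)}{\|q\|_Y\|v\|_X}>0 . \] Let $K\in\mathbb{N}$, $\Delta t>0$, $\mathbb{K}=\{1,\dots,K\}$, and for each $k\in\mathbb{K}$ and $\mu\in\mathcal{D}$ let $f^k(\cdot;\mu)\in X'$, $g^k(\cdot;\mu)\in Y'$. Let the truth solution $u^k(\mu)\in X$, $p^k(\mu)\in Y$, $k\in\mathbb{K}$, be defined by $u^0(\mu)=0$ and, for $k\in\mathbb{K}$, \[ \tfrac{1}{\Delta t}m(u^k(\mu)-u^{k-1}(\mu),v;\mu)+a(u^k(\mu),v;\mu)+b(v,p^k(\mu);\mu)=f^k(v;\mu)\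 \ \forall v\in X,\qquad b(u^k(\mu),q;\mu)=g^k(q;\mu)\ \ \forall q\in Y. \] Let $X_N\subset X$, $Y_N\subset Y$, $N\in\{1,\dots,N_{\max}\}$, be subspaces such that for every $\mu\in\mathcal{D}$ there exist $u^k_N(\mu)\in X_N$, $p^k_N(\mu)\in Y_N$, $k\in\mathbb{K}$, with $u^0_N(\mu)=0$ and, for $k\in\mathbb{K}$, \[ \tfrac{1}{\Delta t}m(u^k_N(\mu)-u^{k-1}_N(\mu),v_N;\mu)+a(u^k_N(\mu),v_N;\mu)+b(v_N,p^k_N(\mu);\mu)=f^k(v_N;\mu)\ \ \forall v_N\in X_N, \] \[ b(u^k_N(\mu),q_N;\mu)=g^k(q_N;\mu)\ \ \forall q_N\in Y_N. \] Define the residuals $r^{1,k}_N(v;\mu)=f^k(v;\mu)-\tfrac{1}{\Delta t}m(u^k_N(\mu)-u^{k-1}_N(\mu),v;\mu)-a(u^k_N(\mu),v;\mu)-b(v,p^k_N(\mu);\mu)$ for $v\in X$ and $r^{2,k}_N(q;\mu)=g^k(q;\mu)-b(u^k_N(\mu),q;\mu)$ for $q\in Y$, and the errors $e^{u,k}_N(\mu)=u^k(\mu)-u^k_N(\mu)$. Let $\mu\in\mathcal{D}$, $N\in\{1,\dots,N_{\max}\}$, $k\in\mathbb{K}$, and let $\alpha_a^{\rm LB}(\mu),\gamma_a^{\rm UB}(\mu),\beta^{\rm LB}(\mu),\gamma_m^{\rm UB}(\mu)$ be positive numbers with $\alpha_a^{\rm LB}(\mu)\le\alpha_a(\mu)$,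 $\gamma_a(\mu)\le\gamma_a^{\rm UB}(\mu)$, $\beta^{\rm LB}(\mu)\le\beta(\mu)$, $\gamma_m(\mu)\le\gamma_m^{\rm UB}(\mu)$. Define \[ \Delta^{{\rm sym},k}_N(\mu)=\Bigg[\Delta t\sum_{j=1}^k\frac{\|r^{1,j}_N(\cdot;\mu)\|^2_{X'}}{\alpha_a^{\rm LB}(\mu)}+\frac{2}{\beta^{\rm LB}(\mu)}\Big(1+\sqrt{\frac{\gamma_a^{\rm UB}(\mu)}{\alpha_a^{\rm LB}(\mu)}}\Big)\|r^{1,j}_N(\cdot;\mu)\|_{X'}\|r^{2,j}_N(\cdot;\mu)\|_{Y'} \] \[ +\Big(\frac{\gamma_m^{\rm UB}(\mu)}{\Delta t}+\gamma_a^{\rm UB}(\mu)\Big)\frac{\|r^{2,j}_N(\cdot;\mu)\|^2_{Y'}}{(\beta^{\rm LB}(\mu))^2}\Bigg]^{1/2}. \] Then \[ \Big(\|e^{u,k}_N(\mu)\|_\mu^2+\Delta t\sum_{j=1}^k\|e^{u,j}_N(\mu)\|^2_{X,\mu}\Big)^{1/2}\le\Delta^{{\rm sym},k}_N(\mu). \]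
   Context: Here $\|v\|_\mu=\sqrt{m(v,v;\mu)}$ and $\|v\|_{X,\mu}=\sqrt{a(v,v;\mu)}$ for $v\in X$; $X'$, $Y'$ are the dual spaces with dual norms $\|r\|_{X'}=\sup_{0\ne v\in X}r(v)/\|v\|_X$ and $\|r\|_{Y'}=\sup_{0\ne q\in Y}r(q)/\|q\|_Y$. In the sum defining $\Delta^{{\rm sym},k}_N(\mu)$, all three terms are inside the sum over $j$ and multiplied by $\Delta t$. *)

(* Defs.v *)
From HB Require Import structures.
From mathcomp Require Import all_boot all_order all_algebra.
From mathcomp Require Import boolp classical_sets reals constructive_ereal ereal.
Set Implicit Arguments.
Unset Strict Implicit.
Unset Printing Implicit Defensive.
Import Order.TTheory GRing.Theory Num.Theory.
Local Open Scope ring_scope.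
Local Open Scope classical_set_scope.

Section Defs.
Context {R : realType}.

Definition bilinear_form (U V : lmodType R) (f : U -> V -> R) : Prop :=
  (forall (c : R) u1 u2 v, f (c *: u1 + u2) v = c * f u1 v + f u2 v) /\
  (forall (c : R) u v1 v2, f u (c *: v1 + v2) = c * f u v1 + f u v2).

Definition linear_functional (U : lmodType R) (r : U -> R) : Prop :=
  forall (c : R) u1 u2, r (c *: u1 + u2) = c * r u1 + r u2.

(* an inner product on U (makes a finite-dim vector space a Hilbert space) *)
Definition inner_product (U : lmodType R) (ip : U -> U -> R) : Prop :=
  bilinear_form ip /\ (forall u v, ip u v = ip v u) /\
  (forall v, v != 0 -> 0 < ip v v).

Definition ipnorm (U : lmodType R) (ip : U -> U -> R) (v : U) : R :=
  Num.sqrt (ip v v).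

Definition cont_const (U : lmodType R) (nU : U -> R) (f : U -> U -> R) : \bar R :=
  ereal_sup [set x | exists u v, u != 0 /\ v != 0 /\ x = (f u v / (nU u * nU v))%:E].

Definition coer_const (U : lmodType R) (nU : U -> R) (f : U -> U -> R) : \bar R :=
  ereal_inf [set x | exists v, v != 0 /\ x = (f v v / (nU v ^+ 2))%:E].

Definition infsup_const (U V : lmodType R) (nU : U -> R) (nV : V -> R)
  (b : U -> V -> R) : \bar R :=
  ereal_inf [set x | exists q, q != 0 /\
    x = ereal_sup [set y | exists v, v != 0 /\ y = (b v q / (nV q * nU v))%:E]].

Definition dual_norm (U : lmodType R) (nU : U -> R) (r : U -> R) : R :=
  sup [set x | exists v, v != 0 /\ x = r v / nU v].

Definition res1 (X Y : lmodType R) (fk : X -> R) (m a : X -> X -> R)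
  (b : X -> Y -> R) (dt : R) (uk ukm1 : X) (pk : Y) : X -> R :=
  fun v => fk v - dt^-1 * m (uk - ukm1) v - a uk v - b v pk.

Definition res2 (X Y : lmodType R) (gk : Y -> R) (b : X -> Y -> R) (uk : X) : Y -> R :=
  fun q => gk q - b uk q.

End Defs.

(* Main.v *)
Require Import Defs.
From HB Require Import structures.
From mathcomp Require Import all_boot all_order all_algebra.
From mathcomp Require Import boolp classical_sets reals constructive_ereal ereal.
From mathcomp Require Import ring lra.
Import Order.TTheory GRing.Theory Num.Theory.
Local Open Scope ring_scope.
Local Open Scope classical_set_scope.

Set Implicit Arguments. Unset Strict Implicit.
Local Open Scope classical_set_scope.


Section BL.
Variables (R : realType) (U V : lmodType R) (f : U -> V -> R).
Hypothesis hf : bilinear_form f.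
Lemma bl_addl x y v : f (x + y) v = f x v + f y v.
Proof. by case: hf => H _; rewrite -[x in LHS]scale1r H mul1r. Qed.
Lemma bl_0l v : f 0 v = 0.
Proof. case: hf => H _; have h := H 1 0 0 v; rewrite scaler0 addr0 mul1r in h.
by apply: (addrI (f 0 v)); rewrite addr0 -h. Qed.
Lemma bl_scalel c x v : f (c *: x) v = c * f x v.
Proof. by case: hf => H _; rewrite -[c *: x]addr0 H bl_0l addr0. Qed.
Lemma bl_oppl x v : f (- x) v = - f x v.
Proof. by rewrite -scaleN1r bl_scalel mulN1r. Qed.
Lemma bl_subl x y v : f (x - y) v = f x v - f y v.
Proof. by rewrite bl_addl bl_oppl. Qed.
Lemma bl_addr x y v : f v (x + y) = f v x + f v y.
Proof. by case: hf => _ H; rewrite -[x in LHS]scale1r H mul1r. Qed.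
Lemma bl_0r v : f v 0 = 0.
Proof. case: hf => _ H; have h := H 1 v 0 0; rewrite scaler0 addr0 mul1r in h.
by apply: (addrI (f v 0)); rewrite addr0 -h. Qed.
Lemma bl_scaler c x v : f v (c *: x) = c * f v x.
Proof. by case: hf => _ H; rewrite -[c *: x]addr0 H bl_0r addr0. Qed.
Lemma bl_oppr x v : f v (- x) = - f v x.
Proof. by rewrite -scaleN1r bl_scaler mulN1r. Qed.
Lemma bl_subr x y v : f v (x - y) = f v x - f v y.
Proof. by rewrite bl_addr bl_oppr. Qed.
End BL.

Section LF.
Variables (R : realType) (U : lmodType R) (r : U -> R).
Hypothesis hr : linear_functional r.
Lemma lf_add x y : r (x + y) = r x + r y.
Proof. by rewrite -[x in LHS]scale1r hr mul1r. Qed.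
Lemma lf_0 : r 0 = 0.
Proof. have h := hr 1 0 0; rewrite scaler0 addr0 mul1r in h.
by apply: (addrI (r 0)); rewrite addr0 -h. Qed.
Lemma lf_scale c x : r (c *: x) = c * r x.
Proof. by rewrite -[c *: x]addr0 hr lf_0 addr0. Qed.
Lemma lf_opp x : r (- x) = - r x.
Proof. by rewrite -scaleN1r lf_scale mulN1r. Qed.
Lemma lf_sub x y : r (x - y) = r x - r y.
Proof. by rewrite lf_add lf_opp. Qed.
End LF.

Section Riesz.
Variables (R : realType) (U : vectType R) (ip : U -> U -> R).
Hypothesis hip : inner_product ip.

Lemma ip_linr w : linear_for *:%R (ip w : U -> R^o).
Proof. by case: hip => -[_ H2] _ c x y; rewrite H2. Qed.

Lemma ip_linl : linear_for *:%R (fun w => linfun (ip w : U -> R^o) : 'Hom(U, R^o)).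
Proof.
move=> c x y; apply/lfunP => z.
rewrite (lfunE (HB.pack (ip (c *: x + y) : U -> R^o) (GRing.isLinear.Build R U R^o *:%R _ (ip_linr _)))).
rewrite add_lfunE scale_lfunE.
rewrite (lfunE (HB.pack (ip x : U -> R^o) (GRing.isLinear.Build R U R^o *:%R _ (ip_linr _)))).
rewrite (lfunE (HB.pack (ip y : U -> R^o) (GRing.isLinear.Build R U R^o *:%R _ (ip_linr _)))).
by case: hip => -[H1 _] _ /=; rewrite H1.
Qed.

Lemma riesz (r : U -> R) : linear_functional r -> exists w, forall v, r v = ip w v.
Proof.
move=> hr.
pose Phi : {linear U -> 'Hom(U, R^o)} := HB.pack (fun w => linfun (ip w : U -> R^o) : 'Hom(U, R^o))
   (GRing.isLinear.Build R U 'Hom(U, R^o) *:%R _ ip_linl).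
pose P := linfun Phi.
have PE w v : P w v = ip w v.
  rewrite /P (lfunE Phi) /=.
  by rewrite (lfunE (HB.pack (ip w : U -> R^o) (GRing.isLinear.Build R U R^o *:%R _ (ip_linr _)))).
have ker0 : lker P == 0%VS.
  apply/lker0P => x y Pxy.
  have := PE x (x - y); have := PE y (x - y); rewrite Pxy => -> Hx.
  apply/eqP; rewrite -subr_eq0; apply/negPn/negP => nz.
  case: hip => H1 [_ H3]; have := H3 _ nz.
  rewrite (bl_subl H1).
  by rewrite Hx subrr ltxx.
have dimP : \dim (P @: fullv) = \dim (fullv : {vspace 'Hom(U, R^o)}).
  rewrite limg_dim_eq ?(eqP ker0) ?capv0 // !dimvf; exact: (esym (muln1 (dim U))).
have limgF : (P @: fullv)%VS = fullv.
  by apply/eqP; rewrite eqEdim subvf dimP leqnn.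
pose rL : {linear U -> R^o} := HB.pack (r : U -> R^o) (GRing.isLinear.Build R U R^o *:%R r hr).
have : linfun rL \in (P @: fullv)%VS by rewrite limgF memvf.
case/memv_imgP => w _ Hw; exists w => v.
by rewrite -PE -Hw (lfunE rL).
Qed.
End Riesz.

Section CS.
Variables (R : realType) (U : lmodType R) (f : U -> U -> R).
Hypotheses (hf : bilinear_form f) (fsym : forall x y, f x y = f y x)
  (fpos : forall v, v != 0 -> 0 < f v v).

Lemma f_ge0 v : 0 <= f v v.
Proof.
have [->|nz] := eqVneq v 0; first by rewrite (bl_0l hf).
exact/ltW/fpos.
Qed.

Lemma cs2 x y : f x y ^+ 2 <= f x x * f y y.
Proof.
have [->|nz] := eqVneq y 0; first by rewrite !(bl_0r hf) expr0n /= mulr0.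
have py := fpos nz.
pose t := f x y / f y y.
have h := f_ge0 (x - t *: y).
rewrite (bl_subl hf) !(bl_subr hf) !(bl_scalel hf) !(bl_scaler hf) (fsym y x) in h.
have e : t * f y y = f x y by rewrite /t mulfVK // gt_eqF.
have h2 : 0 <= f x x - t * f x y by move: h; rewrite e; lra.
have := mulr_ge0 h2 (ltW py).
rewrite mulrBl -mulrA (mulrC (f x y)) mulrA e expr2; lra.
Qed.

Lemma cs x y : f x y <= Num.sqrt (f x x) * Num.sqrt (f y y).
Proof.
rewrite -sqrtrM ?f_ge0 //; apply: le_trans (ler_norm _) _.
by rewrite -sqrtr_sqr ler_wsqrtr // cs2.
Qed.

Lemma nrm_sq v : Num.sqrt (f v v) ^+ 2 = f v v.
Proof. exact/sqr_sqrtr/f_ge0. Qed.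

Lemma nrm_opp v : f (- v) (- v) = f v v.
Proof. by rewrite (bl_oppl hf) (bl_oppr hf) opprK. Qed.
End CS.

Section Dual.
Variables (R : realType) (U : vectType R) (ip : U -> U -> R).
Hypothesis hip : inner_product ip.
Variables (r : U -> R).
Hypothesis hr : linear_functional r.

Let hbil : bilinear_form ip. Proof. by case: hip. Qed.
Let hsym : forall x y, ip x y = ip y x. Proof. by case: hip => _ []. Qed.
Let hpos : forall v, v != 0 -> 0 < ip v v. Proof. by case: hip => _ []. Qed.

Lemma nrm_pos v : v != 0 -> 0 < ipnorm ip v.
Proof. by move=> nz; rewrite /ipnorm sqrtr_gt0 hpos. Qed.

Lemma dual_hasub : has_ubound [set x | exists v, v != 0 /\ x = r v / ipnorm ip v].
Proof.
have [w hw] := riesz hip hr.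
exists (ipnorm ip w) => x [v [nz ->]].
rewrite hw ler_pdivrMr ?nrm_pos //.
exact: (cs hbil hsym hpos).
Qed.

Lemma dual_bound v : r v <= dual_norm (ipnorm ip) r * ipnorm ip v.
Proof.
have [->|nz] := eqVneq v 0.
  by rewrite (lf_0 hr) /ipnorm (bl_0l hbil) sqrtr0 mulr0.
rewrite -ler_pdivrMr ?nrm_pos //.
by apply: (ub_le_sup dual_hasub); exists v.
Qed.

Lemma dual_ge0 : 0 <= dual_norm (ipnorm ip) r.
Proof.
case: (pselect (exists v : U, v != 0)) => [[v nz]|hn].
  have h1 := dual_bound v; have h2 := dual_bound (- v).
  rewrite (lf_opp hr) /ipnorm (nrm_opp hbil hsym) in h2; rewrite /ipnorm in h1.
  have := nrm_pos nz; rewrite /ipnorm => hp.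
  have : 0 <= dual_norm (ipnorm ip) r * Num.sqrt (ip v v) by lra.
  by rewrite pmulr_lge0.
suff -> : dual_norm (ipnorm ip) r = 0 by []. apply: reals.sup_out. case => -[x [v [nz _]]] _; apply: hn; by exists v.
Qed.
End Dual.

Section Consts.
Variables (R : realType) (X Y : vectType R) (ipX : X -> X -> R) (ipY : Y -> Y -> R).
Hypotheses (hX : inner_product ipX) (hY : inner_product ipY).

Let hbilX : bilinear_form ipX. Proof. by case: hX. Qed.
Let hsymX : forall x y, ipX x y = ipX y x. Proof. by case: hX => _ []. Qed.
Let hposX : forall v, v != 0 -> 0 < ipX v v. Proof. by case: hX => _ []. Qed.

Lemma contP (f : X -> X -> R) (g : R) : bilinear_form f ->
  (cont_const (ipnorm ipX) f <= g%:E)%E -> forall v, f v v <= g * ipX v v.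
Proof.
move=> hf hc v; have [->|nz] := eqVneq v 0.
  by rewrite (bl_0l hf) (bl_0l hbilX) mulr0.
have : ((f v v / (ipnorm ipX v * ipnorm ipX v))%:E <= g%:E)%E.
  apply: le_trans hc; apply: ereal_sup_ubound; by exists v, v.
rewrite lee_fin -expr2 /ipnorm (nrm_sq hbilX hposX) ler_pdivrMr //.
exact: hposX.
Qed.

Lemma coerP (f : X -> X -> R) (l : R) : bilinear_form f ->
  (l%:E <= coer_const (ipnorm ipX) f)%E -> forall v, l * ipX v v <= f v v.
Proof.
move=> hf hc v; have [->|nz] := eqVneq v 0.
  by rewrite (bl_0l hf) (bl_0l hbilX) mulr0.
have : (l%:E <= (f v v / (ipnorm ipX v ^+ 2))%:E)%E.
  apply: le_trans hc _; apply: ereal_inf_lbound; by exists v.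
rewrite lee_fin /ipnorm (nrm_sq hbilX hposX) ler_pdivlMr //.
exact: hposX.
Qed.

Lemma infsupP (b : X -> Y -> R) (l : R) :
  (l%:E <= infsup_const (ipnorm ipX) (ipnorm ipY) b)%E -> forall q, q != 0 ->
  forall M, (forall v, v != 0 -> b v q / (ipnorm ipY q * ipnorm ipX v) <= M) -> l <= M.
Proof.
move=> hc q nq M hM.
have : (l%:E <= M%:E)%E.
  apply: le_trans hc _; apply: le_trans; first (apply: ereal_inf_lbound; exists q; split; first exact: nq; reflexivity).
  apply: ge_ereal_sup => y [v [nv ->]]; rewrite lee_fin; exact: hM.
by rewrite lee_fin.
Qed.
End Consts.

Section Step.
Variables (R : realType) (X Y : vectType R) (ipX : X -> X -> R) (ipY : Y -> Y -> R).
Variables (m a : X -> X -> R) (b : X -> Y -> R) (dt aLB gaUB bLB gmUB : R).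
Hypotheses (hX : inner_product ipX) (hY : inner_product ipY).
Hypotheses (mbil : bilinear_form m) (msym : forall v w, m v w = m w v)
  (mpos : forall v, v != 0 -> 0 < m v v).
Hypotheses (abil : bilinear_form a) (asym : forall v w, a v w = a w v).
Hypothesis (bbil : bilinear_form b).
Hypotheses (dt0 : 0 < dt) (aLB0 : 0 < aLB) (gaUB0 : 0 < gaUB) (bLB0 : 0 < bLB) (gmUB0 : 0 < gmUB).
Hypotheses (hcoer : (aLB%:E <= coer_const (ipnorm ipX) a)%E)
  (hconta : (cont_const (ipnorm ipX) a <= gaUB%:E)%E)
  (hinfsup : (bLB%:E <= infsup_const (ipnorm ipX) (ipnorm ipY) b)%E)
  (hcontm : (cont_const (ipnorm ipX) m <= gmUB%:E)%E).

Let hbilX : bilinear_form ipX. Proof. by case: hX. Qed.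
Let hsymX : forall x y, ipX x y = ipX y x. Proof. by case: hX => _ []. Qed.
Let hposX : forall v, v != 0 -> 0 < ipX v v. Proof. by case: hX => _ []. Qed.
Let hbilY : bilinear_form ipY. Proof. by case: hY. Qed.
Let hsymY : forall x y, ipY x y = ipY y x. Proof. by case: hY => _ []. Qed.
Let hposY : forall v, v != 0 -> 0 < ipY v v. Proof. by case: hY => _ []. Qed.

Lemma apos v : v != 0 -> 0 < a v v.
Proof.
move=> nz; apply: lt_le_trans (coerP hX abil hcoer v).
by rewrite mulr_gt0 // hposX.
Qed.

Lemma Zexist (r2f : Y -> R) (hr2 : linear_functional r2f) (E : X) (q : Y) :
  (forall w, r2f w = b E w) ->
  exists Z, b Z q = b E q /\ ipX Z Z <= dual_norm (ipnorm ipY) r2f ^+ 2 / bLB ^+ 2.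
Proof.
move=> F2; set r2 := dual_norm _ r2f.
have r2ge0 : 0 <= r2 by apply: dual_ge0.
have [->|nq] := eqVneq q 0.
  exists 0; rewrite (bl_0l bbil) (bl_0r bbil) (bl_0l hbilX); split => //.
  by rewrite divr_ge0 // exprn_ge0 // ltW.
have hl : linear_functional (fun v => b v q).
  by move=> c u1 u2; case: bbil => H _; rewrite H.
have [w hw] := riesz hX hl.
have npq := nrm_pos hY nq.
have hM : bLB <= ipnorm ipX w / ipnorm ipY q.
  apply: (infsupP hinfsup nq) => v nv.
  rewrite hw ler_pdivrMr ?mulr_gt0 ?nrm_pos // mulrA divfK ?gt_eqF //.
  exact: (cs hbilX hsymX hposX).
have hw' : bLB * ipnorm ipY q <= ipnorm ipX w by rewrite -ler_pdivlMr.
have nw0 : 0 < ipnorm ipX w by apply: lt_le_trans hw'; rewrite mulr_gt0.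
have W0 : 0 < ipX w w by move: nw0; rewrite /ipnorm sqrtr_gt0.
set s := r2f q.
exists ((s / ipX w w) *: w); split.
  by rewrite hw (bl_scaler hbilX) divfK ?gt_eqF // /s F2.
rewrite (bl_scalel hbilX) (bl_scaler hbilX).
have hs1 : s <= r2 * ipnorm ipY q by apply: dual_bound.
have hs2 : - s <= r2 * ipnorm ipY q.
  rewrite /s -(lf_opp hr2); apply: le_trans (dual_bound hY hr2 (- q)) _.
  by rewrite /ipnorm (nrm_opp hbilY hsymY).
have hs : s ^+ 2 <= (r2 * ipnorm ipY q) ^+ 2.
  have t0 : 0 <= r2 * ipnorm ipY q by rewrite mulr_ge0 ?sqrtr_ge0.
  move: hs1 hs2 t0; set t := r2 * ipnorm ipY q => hs1 hs2 t0.
  have h1 : 0 <= t - s by lra.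
  have h2 : 0 <= t + s by lra.
  have := mulr_ge0 h1 h2.
  rewrite !expr2; lra.
have hW : (bLB * ipnorm ipY q) ^+ 2 <= ipX w w.
  rewrite -(nrm_sq hbilX hposX w) ler_sqr ?nnegrE ?mulr_ge0 ?sqrtr_ge0 ?(ltW bLB0) //.
have -> : s / ipX w w * (s / ipX w w * ipX w w) = s ^+ 2 / ipX w w.
  by field; rewrite gt_eqF.
rewrite ler_pdivrMr // mulrAC ler_pdivlMr ?exprn_gt0 //.
apply: le_trans (_ : r2 ^+ 2 * (bLB * ipnorm ipY q) ^+ 2 <= _).
  have := ler_wpM2r (exprn_ge0 2 (ltW bLB0)) hs.
  by rewrite !exprMn; lra.
by rewrite ler_wpM2l // exprn_ge0.
Qed.

Lemma step (r1f : X -> R) (r2f : Y -> R) (hr1 : linear_functional r1f)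
  (hr2 : linear_functional r2f) (E P : X) (q : Y) :
  (forall v, r1f v = dt^-1 * m (E - P) v + a E v + b v q) ->
  (forall w, r2f w = b E w) ->
  m E E - m P P + dt * a E E <= dt * (dual_norm (ipnorm ipX) r1f ^+ 2 / aLB
         + 2 / bLB * (1 + Num.sqrt (gaUB / aLB)) * dual_norm (ipnorm ipX) r1f * dual_norm (ipnorm ipY) r2f
         + (gmUB / dt + gaUB) * (dual_norm (ipnorm ipY) r2f ^+ 2 / bLB ^+ 2)).
Proof.
move=> F1 F2.
have [Z [hbZ hZ]] := Zexist hr2 q F2.
set r1 := dual_norm (ipnorm ipX) r1f in hZ *.
set r2 := dual_norm (ipnorm ipY) r2f in hZ *.
have r1ge0 : 0 <= r1 by apply: dual_ge0.
have r2ge0 : 0 <= r2 by apply: dual_ge0.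
have h0 := F1 (E - Z).
rewrite (bl_subl bbil) hbZ subrr addr0 (lf_sub hr1) (bl_subr abil) in h0.
rewrite (bl_subr mbil) !(bl_subl mbil) in h0.
have h0' : dt * (r1f E - r1f Z) =
    (m E E - m P E - (m E Z - m P Z)) + dt * (a E E - a E Z).
  by rewrite h0; field; rewrite gt_eqF.
have hp := f_ge0 mbil mpos ((E - P) - Z).
rewrite !(bl_subl mbil) !(bl_subr mbil) (msym P E) (msym Z E) (msym Z P) in hp.
rewrite (msym P E) in h0'.
have hmZ := contP hX mbil hcontm Z.
have haZ := contP hX abil hconta Z.
have haE := coerP hX abil hcoer E.
have hcsA := cs abil asym apos E Z.
have hr1E : r1f E <= r1 * ipnorm ipX E by apply: dual_bound.
have hr1Z : - r1f Z <= r1 * ipnorm ipX Z.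
  rewrite -(lf_opp hr1); apply: le_trans (dual_bound hX hr1 (- Z)) _.
  by rewrite /ipnorm (nrm_opp hbilX hsymX).
rewrite /ipnorm in hr1E hr1Z.
set rho := r2 / bLB.
have rho0 : 0 <= rho by rewrite divr_ge0 // ltW.
have hZ' : ipX Z Z <= rho ^+ 2 by rewrite /rho expr_div_n.
have nZ : Num.sqrt (ipX Z Z) <= rho.
  by rewrite -(ger0_norm rho0) -sqrtr_sqr ler_wsqrtr.
set sa := Num.sqrt aLB; set sg := Num.sqrt gaUB.
have sa0 : 0 < sa by rewrite sqrtr_gt0.
have sg0 : 0 <= sg by rewrite sqrtr_ge0.
have eaLB : aLB = sa ^+ 2 by rewrite sqr_sqrtr // ltW.
have egaUB : gaUB = sg ^+ 2 by rewrite sqr_sqrtr // ltW.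
have eS : Num.sqrt (gaUB / aLB) = sg / sa.
  by rewrite sqrtrM ?(ltW gaUB0) // sqrtrV // ltW.
set A := Num.sqrt (a E E).
have A0 : 0 <= A by rewrite sqrtr_ge0.
have aE0 : 0 <= a E E.
  by apply: le_trans haE; rewrite mulr_ge0 ?(ltW aLB0) ?(f_ge0 hbilX hposX).
have eA : a E E = A ^+ 2 by rewrite sqr_sqrtr.
have hnE : sa * Num.sqrt (ipX E E) <= A.
  by rewrite -sqrtrM ?(ltW aLB0) // ler_wsqrtr.
have hsZ : Num.sqrt (a Z Z) <= sg * Num.sqrt (ipX Z Z).
  by rewrite -sqrtrM ?(ltW gaUB0) // ler_wsqrtr.
set d := r1 / sa; set c := sg * rho.
have d0 : 0 <= d by rewrite divr_ge0 // ltW.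
have c0 : 0 <= c by rewrite mulr_ge0.
have i1 : r1f E <= d * A.
  apply: le_trans hr1E _.
  have -> : r1 * Num.sqrt (ipX E E) = d * (sa * Num.sqrt (ipX E E)).
    by rewrite /d; field; rewrite gt_eqF.
  by rewrite ler_wpM2l.
have i2 : a E Z <= A * c.
  apply: le_trans hcsA _; rewrite ler_wpM2l //.
  apply: le_trans hsZ _; rewrite /c ler_wpM2l //.
have i3 : - r1f Z <= r1 * rho.
  by apply: le_trans hr1Z _; rewrite ler_wpM2l.
have i4 : m Z Z <= gmUB * rho ^+ 2.
  by apply: le_trans hmZ _; rewrite ler_wpM2l // ltW.
have i5 : 0 <= (A - (c + d)) ^+ 2 by apply: sqr_ge0.
have key : 2 * (r1f E - r1f Z - a E E + a E Z) + a E E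
    <= (c + d) ^+ 2 + 2 * (r1 * rho).
  rewrite eA; move: i5; rewrite !expr2; nra.
have key' := ler_wpM2l (ltW dt0) key.
have eT : dt * (r1 ^+ 2 / aLB + 2 / bLB * (1 + Num.sqrt (gaUB / aLB)) * r1 * r2
         + (gmUB / dt + gaUB) * (r2 ^+ 2 / bLB ^+ 2))
   = dt * ((c + d) ^+ 2 + 2 * (r1 * rho)) + gmUB * rho ^+ 2.
  rewrite eS /c /d /rho eaLB egaUB; field.
  by rewrite !gt_eqF.
rewrite eT; move: key' h0' hp i4; rewrite eA; nra.
Qed.
End Step.

Unset Implicit Arguments. Set Strict Implicit.

Theorem proposition2p2 (R : realType) (n : nat) (X Y : vectType R)
  (ipX : X -> X -> R) (ipY : Y -> Y -> R) (D : set 'rV[R]_n)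
  (m a : 'rV[R]_n -> X -> X -> R) (b : 'rV[R]_n -> X -> Y -> R)
  (K : nat) (dt : R)
  (f : nat -> 'rV[R]_n -> X -> R) (g : nat -> 'rV[R]_n -> Y -> R)
  (u : 'rV[R]_n -> nat -> X) (p : 'rV[R]_n -> nat -> Y)
  (Nmax : nat) (XN : nat -> {vspace X}) (YN : nat -> {vspace Y})
  (uN : nat -> 'rV[R]_n -> nat -> X) (pN : nat -> 'rV[R]_n -> nat -> Y)
  (mu : 'rV[R]_n) (N k : nat) (aLB gaUB bLB gmUB : R) :
  inner_product ipX -> inner_product ipY ->
  (forall nu, D nu ->
     [/\ bilinear_form (m nu), (forall v w, m nu v w = m nu w v)
       & (forall v, v != 0 -> 0 < m nu v v)]) ->
  (forall nu, D nu ->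
     bilinear_form (a nu) /\ (forall v w, a nu v w = a nu w v)) ->
  (forall nu, D nu -> bilinear_form (b nu)) ->
  (forall nu, D nu ->
     [/\ (cont_const (ipnorm ipX) (m nu) < +oo)%E,
         (cont_const (ipnorm ipX) (a nu) < +oo)%E,
         (0 < coer_const (ipnorm ipX) (a nu))%E
       & (0 < infsup_const (ipnorm ipX) (ipnorm ipY) (b nu))%E]) ->
  0 < dt ->
  (forall j nu, (1 <= j <= K)%N -> D nu ->
     linear_functional (f j nu) /\ linear_functional (g j nu)) ->
  (* truth solution *)
  (forall nu, D nu -> u nu 0%N = 0 /\
     forall j, (1 <= j <= K)%N ->
       (forall v, dt^-1 * m nu (u nu j - u nu j.-1) v + a nu (u nu j) v
                  + b nu v (p nu j) = f j nu v) /\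
       (forall q, b nu (u nu j) q = g j nu q)) ->
  (* reduced basis solutions *)
  (forall N', (1 <= N' <= Nmax)%N -> forall nu, D nu ->
     uN N' nu 0%N = 0 /\
     forall j, (1 <= j <= K)%N ->
       [/\ uN N' nu j \in XN N', pN N' nu j \in YN N',
         (forall v, v \in XN N' ->
            dt^-1 * m nu (uN N' nu j - uN N' nu j.-1) v + a nu (uN N' nu j) v
              + b nu v (pN N' nu j) = f j nu v)
       & (forall q, q \in YN N' -> b nu (uN N' nu j) q = g j nu q)]) ->
  D mu -> (1 <= N <= Nmax)%N -> (1 <= k <= K)%N ->
  0 < aLB -> 0 < gaUB -> 0 < bLB -> 0 < gmUB ->
  (aLB%:E <= coer_const (ipnorm ipX) (a mu))%E ->
  (cont_const (ipnorm ipX) (a mu) <= gaUB%:E)%E ->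
  (bLB%:E <= infsup_const (ipnorm ipX) (ipnorm ipY) (b mu))%E ->
  (cont_const (ipnorm ipX) (m mu) <= gmUB%:E)%E ->
  let e := fun j => u mu j - uN N mu j in
  let r1 := fun j => dual_norm (ipnorm ipX)
              (res1 (f j mu) (m mu) (a mu) (b mu) dt (uN N mu j) (uN N mu j.-1) (pN N mu j)) in
  let r2 := fun j => dual_norm (ipnorm ipY) (res2 (g j mu) (b mu) (uN N mu j)) in
  let Delta := Num.sqrt (dt * \sum_(1 <= j < k.+1)
        (r1 j ^+ 2 / aLB
         + 2 / bLB * (1 + Num.sqrt (gaUB / aLB)) * r1 j * r2 j
         + (gmUB / dt + gaUB) * (r2 j ^+ 2 / bLB ^+ 2))) in
  Num.sqrt ((Num.sqrt (m mu (e k) (e k))) ^+ 2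
            + dt * \sum_(1 <= j < k.+1) (Num.sqrt (a mu (e j) (e j))) ^+ 2)
  <= Delta.

Proof.
move=> hX hY Hm Ha Hb _ dt0 Hfg Htruth Hred Dmu HN Hk aLB0 gaUB0 bLB0 gmUB0
  hcoer hconta hinfsup hcontm.
cbv zeta.
have [mbil msym mpos] := Hm mu Dmu.
have [abil asym] := Ha mu Dmu.
have bbil := Hb mu Dmu.
have [tu0 tuj] := Htruth mu Dmu.
have [ru0 ruj] := Hred N HN mu Dmu.
have hbilX : bilinear_form ipX by case: hX.
have hposX : forall v, v != 0 -> 0 < ipX v v by case: hX => _ [].
have aposE : forall v, 0 <= a mu v v.
  move=> v; apply: le_trans (coerP hX abil hcoer v).
  by rewrite mulr_ge0 ?(ltW aLB0) ?(f_ge0 hbilX hposX).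
apply: ler_wsqrtr.
rewrite sqr_sqrtr ?(f_ge0 mbil mpos) //.
under eq_bigr do rewrite sqr_sqrtr ?aposE //.
pose r1 := fun j => dual_norm (ipnorm ipX)
   (res1 (f j mu) (m mu) (a mu) (b mu) dt (uN N mu j) (uN N mu j.-1) (pN N mu j)).
pose r2 := fun j => dual_norm (ipnorm ipY) (res2 (g j mu) (b mu) (uN N mu j)).
pose T := fun j => r1 j ^+ 2 / aLB + 2 / bLB * (1 + Num.sqrt (gaUB / aLB)) * r1 j * r2 j
   + (gmUB / dt + gaUB) * (r2 j ^+ 2 / bLB ^+ 2).
suff H : forall k', (k' <= K)%N ->
  m mu (u mu k' - uN N mu k') (u mu k' - uN N mu k')
  + dt * \sum_(1 <= j < k'.+1) a mu (u mu j - uN N mu j) (u mu j - uN N mu j)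
  <= dt * \sum_(1 <= j < k'.+1) T j.
  by apply: H; case/andP: Hk.
elim => [_|k' IH hk'].
  by rewrite tu0 ru0 subrr (bl_0l mbil) !big_geq // mulr0 addr0.
have hj : (1 <= k'.+1 <= K)%N by rewrite hk'.
have IH' := IH (ltnW hk').
rewrite [in X in X <= _]big_nat_recr // [in X in _ <= X]big_nat_recr //.
have [tF tG] := tuj _ hj.
have [_ _ rF rG] := ruj _ hj.
have [hf hg] := Hfg _ _ hj Dmu.
have hr1 : linear_functional (res1 (f k'.+1 mu) (m mu) (a mu) (b mu) dt
                    (uN N mu k'.+1) (uN N mu k') (pN N mu k'.+1)).
  move=> c x y; rewrite /res1 hf.
  rewrite !(bl_addr mbil) !(bl_scaler mbil) !(bl_addr abil) !(bl_scaler abil).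
  rewrite (bl_addl bbil) (bl_scalel bbil); ring.
have hr2 : linear_functional (res2 (g k'.+1 mu) (b mu) (uN N mu k'.+1)).
  move=> c x y; rewrite /res2 hg (bl_addr bbil) (bl_scaler bbil); ring.
have := step hX hY mbil msym mpos abil asym bbil dt0 aLB0 gaUB0 bLB0 gmUB0
  hcoer hconta hinfsup hcontm hr1 hr2
  (E := u mu k'.+1 - uN N mu k'.+1) (P := u mu k' - uN N mu k')
  (q := p mu k'.+1 - pN N mu k'.+1).
have F1 : forall v, res1 (f k'.+1 mu) (m mu) (a mu) (b mu) dt
                    (uN N mu k'.+1) (uN N mu k') (pN N mu k'.+1) v =
   dt^-1 * m mu ((u mu k'.+1 - uN N mu k'.+1) - (u mu k' - uN N mu k')) v
   + a mu (u mu k'.+1 - uN N mu k'.+1) v + b mu v (p mu k'.+1 - pN N mu k'.+1).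
  move=> v; rewrite /res1 -tF /=.
  rewrite !(bl_subl mbil) (bl_subl abil) (bl_subr bbil); ring.
have F2 : forall w, res2 (g k'.+1 mu) (b mu) (uN N mu k'.+1) w =
   b mu (u mu k'.+1 - uN N mu k'.+1) w.
  by move=> w; rewrite /res2 -tG (bl_subl bbil).
move=> /(_ F1 F2) hs.
have hs' : m mu (u mu k'.+1 - uN N mu k'.+1) (u mu k'.+1 - uN N mu k'.+1) -
    m mu (u mu k' - uN N mu k') (u mu k' - uN N mu k') +
    dt * a mu (u mu k'.+1 - uN N mu k'.+1) (u mu k'.+1 - uN N mu k'.+1) <=
    dt * T k'.+1 := hs.
move: IH' hs'; set S1 := \sum_(_ <= _ < _) _; set S2 := \sum_(_ <= _ < _) _.
move=> IH' hs'; rewrite [dt * (S1 + _)]mulrDr [dt * (S2 + _)]mulrDr; lra.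
Qed.
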